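(* Let $r\geqslant 2$ and let $\mathcal{G}$ be a Newton graph of order $r$ on the torus $T$, with vertices $v_1,\dots,v_r$, faces $F_{r+1},\dots,F_{r+r}$, and edges $e_1,\dots,e_{2r}$. Let $\mathcal{G}^{*}$ be a geometric dual of $\mathcal{G}$, with vertex $v^{*}_{r+i}$ lying in $F_{r+i}$ and edge $e_k^{*}$ the dual edge crossing $e_k$. Put $\delta_i=\deg(v_i)$ and $\delta_i^{*}=\deg(v^{*}_{r+i})$, $i=1,\dots,r$. Then $$1<\delta_i\leqslant 2r,\qquad 1<\delta^{*}_i\leqslant 2r\quad (i=1,\dots,r),\qquad \sum_{i=1}^{r}\delta_i=\sum_{i=1}^{r}\delta^{*}_i=4r.$$ Moreover, the common refinement $\mathcal{G}\wedge\mathcal{G}^{*}$ has precisely $4r$ faces, and no vertex $s_k$ of $\mathcal{G}\wedge\mathcal{G}^{*}$ is connected by two edges of $\mathcal{G}\wedge\mathcal{G}^{*}$ to the same vertex $v_i$ or to the same vertex $v^{*}_{r+i}$.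
   Context: All graphs are cellular embeddings in the torus $T$ (each face homeomorphic to an open disk) of connected abstract multigraphs without loops, having $r$ vertices, $2r$ edges and hence $r$ faces; $r$ is the order. Such a graph has the E(Euler)-property if the boundary of each face, as a subgraph, is Eulerian: it admits a closed facial walk traversing each of its edges exactly once and passing through all its vertices (equivalently, every edge lies on the boundaries of two different faces, each traversed once). It has the A(angle)-property if to every sector of a face at a vertex on its boundary one can assign a well-defined strictly positive angle such that these angles sum up to $2\pi$ (around each vertex, and over the sectors of each face). A Newton graph is such a graph having both the A-property and the E-property. The geometric dual $\mathcal{G}^{*}$ has one vertex in each face of $\mathcal{G}$ and one edge $e_k^{*}$ crossing each edge $e_k$ of $\mathcal{G}$ exactly once; $\mathcal{G}^{*}$ is again a Newton graph of order $r$. The common refinement $\mathcal{G}\wedge\mathcal{G}^{*}$ is the embedded graph whose vertices are the vertices $v_i$ of $\mathcal{G}$, the crossing points $s_k$ of $e_k$ and $e_k^{*}$ ($k=1,\dots,2r$), and the vertices $v^{*}_{r+i}$ of $\mathcal{G}^{*}$; each $e_k$ (resp. $e_k^{*}$) is split into two edges of $\mathcal{G}\wedge\mathcal{G}^{*}$ joining $s_k$ to the two end vertices of $e_k$ (resp. $e_k^{*}$), and there are no other edges. *)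

(* Defs.v *)
From HB Require Import structures.
From Stdlib Require Import Reals.
From mathcomp Require Import all_boot all_order all_algebra all_fingroup.
From mathcomp Require Import Rstruct.
Set Implicit Arguments. Unset Strict Implicit. Unset Printing Implicit Defensive.
Import GRing.Theory Num.Theory.

(* Combinatorial (oriented) maps = cellular embeddings of connected multigraphs in
   orientable closed surfaces.  Darts (half-edges) form a finite type D;
   [alpha] pairs the two darts of an edge, [sigma] is the counterclockwise rotation
   of darts around their vertex.  The face orbit of a dart
   x is the face lying to the right of x; the sector (angle) indexed by x is the
   sector at the vertex of x between sigma^-1 x and x, which lies in the face of x. *)

Section Maps.
Variable D : finType.
Variables alpha sigma : {perm D}.

(* (alpha * sigma) x = sigma (alpha x) *)
Definition face_perm : {perm D} := (alpha * sigma)%g.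

Definition vertices := porbits sigma.
Definition faces := porbits face_perm.

Definition is_map : Prop :=
  (forall x, alpha x != x) /\ (forall x, alpha (alpha x) = x) /\
  (forall x y, connect (fun u v => (v == alpha u) || (v == sigma u)) x y).

(* A connected loopless multigraph cellularly embedded in the torus, with r vertices,
   2r edges (4r darts) and r faces (Euler characteristic r - 2r + r = 0, orientable:
   the torus). *)
Definition torus_graph (r : nat) : Prop :=
  [/\ is_map, #|D| = 4 * r, #|vertices| = r, #|faces| = r &
      (forall x, alpha x \notin porbit sigma x) (* no loops *) ].

(* E-property: every edge lies on the boundaries of two different faces. *)
Definition E_property : Prop := forall x, alpha x \notin porbit face_perm x.

Local Open Scope ring_scope.
Definition A_property : Prop :=
  exists ang : D -> R,
    [/\ forall x, 0 < ang x,
        forall x, \sum_(y in porbit sigma x) ang y = 2 * PI &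
        forall x, \sum_(y in porbit face_perm x) ang y = 2 * PI].
Local Close Scope ring_scope.

Definition newton_graph (r : nat) : Prop :=
  [/\ torus_graph r, E_property & A_property].

(* Geometric dual: same darts, dart x of the dual being the half of the dual edge
   crossing the edge of x that lies in the face of x; vertex rotation is the
   (counterclockwise) face traversal face_perm^-1. *)
Definition dual_sigma : {perm D} := (face_perm^-1)%g.
Definition dual_vertices := porbits dual_sigma.

(* Darts:
     inl (inl d) = P d : at v(d), half of e(d) towards the crossing point s_{e(d)};
     inl (inr d) = Q d : at s_{e(d)}, towards v(d);
     inr (inl d) = R d : at the dual vertex of the face of d, towards s_{e(d)};
     inr (inr d) = S d : at s_{e(d)}, towards the dual vertex of the face of d. *)
Definition rdart := ((D + D) + (D + D))%type.

Definition ref_alpha_fun (z : rdart) : rdart :=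
  match z with
  | inl (inl d) => inl (inr d)
  | inl (inr d) => inl (inl d)
  | inr (inl d) => inr (inr d)
  | inr (inr d) => inr (inl d)
  end.

Lemma ref_alpha_funK : involutive ref_alpha_fun.
Proof. by case=> [[]|[]]. Qed.

Definition ref_alpha : {perm rdart} := perm (inv_inj ref_alpha_funK).

Definition ref_sigma_fun (z : rdart) : rdart :=
  match z with
  | inl (inl d) => inl (inl (sigma d))
  | inl (inr d) => inr (inr d)
  | inr (inr d) => inl (inr (alpha d))
  | inr (inl d) => inr (inl (dual_sigma d))
  end.

Definition ref_sigma_inv (z : rdart) : rdart :=
  match z with
  | inl (inl d) => inl (inl ((sigma^-1)%g d))
  | inr (inr d) => inl (inr d)
  | inl (inr d) => inr (inr ((alpha^-1)%g d))
  | inr (inl d) => inr (inl ((dual_sigma^-1)%g d))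
  end.

Lemma ref_sigma_funK : cancel ref_sigma_fun ref_sigma_inv.
Proof. by case=> [[]|[]] d /=; rewrite ?permK. Qed.

Definition ref_sigma : {perm rdart} := perm (can_inj ref_sigma_funK).

Definition ref_face_perm : {perm rdart} := (ref_alpha * ref_sigma)%g.
Definition ref_faces := porbits ref_face_perm.

Definition crossing_vertex (d : D) : {set rdart} := porbit ref_sigma (inl (inr d)).

End Maps.

(* Main.v *)
Require Import Defs.
From HB Require Import structures.
From mathcomp Require Import all_boot all_order all_algebra all_fingroup.
From mathcomp Require Import zify.

Set Implicit Arguments. Unset Strict Implicit. Unset Printing Implicit Defensive.

Section Gen.
Variable T : finType.
Implicit Types (s a : {perm T}) (x y : T).

Lemma porbit_sub s (X : {set T}) x : x \in X -> (forall y, y \in X -> s y \in X) ->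
  porbit s x \subset X.
Proof.
move=> xX cl; apply/subsetP=> y /porbitP[i ->]; elim: i => [|i IH].
  by rewrite expg0 perm1.
by rewrite expgSr permM cl.
Qed.

Lemma porbitS s x : porbit s (s x) = porbit s x.
Proof. by have := porbit_perm s 1 x; rewrite expg1. Qed.

Lemma mem_porbitS s x : s x \in porbit s x.
Proof. by have := mem_porbit s 1 x; rewrite expg1. Qed.

Lemma deg_gt1 s x : s x != x -> 1 < #|porbit s x|.
Proof.
move=> sx.
have: [set x; s x] \subset porbit s x.
  by apply/subsetP=> y; rewrite !inE => /orP[]/eqP->; rewrite ?porbit_id ?mem_porbitS.
by move/subset_leq_card; rewrite cards2 eq_sym sx.
Qed.

Lemma deg_le s a x : (forall y, a y \notin porbit s y) -> 2 * #|porbit s x| <= #|T|.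
Proof.
move=> nl; set V := porbit s x.
have sub: a @: V \subset ~: V.
  apply/subsetP=> _ /imsetP[y yV ->]; rewrite inE.
  have <- : porbit s y = V by apply/eqP; rewrite eq_porbit_mem.
  exact: nl.
move/subset_leq_card: sub; rewrite card_imset; last exact: perm_inj.
have := cardsC V; lia.
Qed.

Lemma porbits_partition s : partition (porbits s) [set: T].
Proof.
apply/and3P; split.
- apply/eqP/setP=> x; rewrite inE; apply/bigcupP; exists (porbit s x).
    by apply: imset_f. 
  exact: porbit_id.
- apply/trivIsetP=> A B /imsetP[x _ ->] /imsetP[y _ ->] neq.
  apply/pred0P=> z /=; apply/negbTE/negP=> /andP[zx zy].
  move/negP: neq; apply; apply/eqP.
  have <- : porbit s z = porbit s x by apply/eqP; rewrite eq_porbit_mem.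
  by apply/eqP; rewrite eq_porbit_mem.
- apply/negP=> /imsetP[x _ e].
  by have := porbit_id s x; rewrite -e inE.
Qed.

Lemma sum_porbits s : \sum_(V in porbits s) #|V| = #|T|.
Proof. by rewrite -(card_partition (porbits_partition s)) cardsT. Qed.

End Gen.

Theorem lemma2p1 (r : nat) (D : finType) (alpha sigma : {perm D}) :
  2 <= r ->
  newton_graph alpha sigma r ->
  [/\ (forall V, V \in vertices sigma -> 1 < #|V| <= 2 * r),
      (forall V, V \in dual_vertices alpha sigma -> 1 < #|V| <= 2 * r),
      \sum_(V in vertices sigma) #|V| = 4 * r /\
        \sum_(V in dual_vertices alpha sigma) #|V| = 4 * r,
      #|ref_faces alpha sigma| = 4 * r &
      (forall (d : D) (x y : rdart D),
          x \in crossing_vertex alpha sigma d ->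
          y \in crossing_vertex alpha sigma d -> x != y ->
          porbit (ref_sigma alpha sigma) (ref_alpha D x)
            != porbit (ref_sigma alpha sigma) (ref_alpha D y))].
Proof.
move=> r2 [[[anx [aK _]] cardD cardV cardF noloop] E _].
set fp := face_perm alpha sigma.
have fpE : forall x, fp x = sigma (alpha x) by move=> x; rewrite /fp /face_perm permM.
have dualE : forall x, porbit (dual_sigma alpha sigma) x = porbit fp x.
  by move=> x; rewrite /dual_sigma porbitV.
split.
- move=> _ /imsetP[x _ ->]; apply/andP; split; last first.
    by have := deg_le x noloop; lia.
  apply: deg_gt1; apply/eqP=> sx.
  have : fp (alpha x) = x by rewrite fpE aK sx.
  by move=> h; move: (E x); rewrite porbit_sym -{1}h mem_porbitS.
- move=> _ /imsetP[x _ ->]; apply/andP; split; last first.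
    have := @deg_le _ (dual_sigma alpha sigma) alpha x.
    rewrite cardD; move=> H; suff: 2 * #|porbit (dual_sigma alpha sigma) x| <= 4 * r by lia.
    by apply: H => y; rewrite dualE; apply: E.
  apply: deg_gt1; apply/eqP=> sx.
  have h : fp x = x by rewrite -{1}sx /dual_sigma permKV.
  have := noloop x; rewrite porbit_sym; move: h; rewrite fpE => h.
  by rewrite -{1}h mem_porbitS.
- by rewrite /vertices /dual_vertices !sum_porbits cardD.
- set f := ref_face_perm alpha sigma.
  set ds := dual_sigma alpha sigma.
  have fE : forall z, f z = ref_sigma_fun alpha sigma (ref_alpha_fun z).
    by move=> z; rewrite /f /ref_face_perm permM !permE.
  have fpds : forall d, sigma (alpha (ds d)) = d.
    by move=> d; rewrite -fpE /ds /dual_sigma permKV.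
  have Yorb : forall d, porbit f (inl (inl d)) \subset [set z | [|| z == inl (inl d),
      z == inr (inr d), z == inr (inl (ds d)) | z == inl (inr (alpha (ds d)))]].
    move=> d; apply: porbit_sub; first by rewrite inE eqxx.
    by move=> z; rewrite !inE => /or4P[]/eqP->; rewrite fE /= ?fpds eqxx ?orbT.
  have inj : injective (fun d => porbit f (inl (inl d))).
    move=> d d' /= e; have := porbit_id f (inl (inl d')); rewrite -e.
    by move=> /(subsetP (Yorb d)); rewrite !inE; case/or4P=> /eqP[] // ->.
  have Eq : porbits f = [set porbit f (inl (inl d)) | d in [set: D]].
    apply/setP=> O; apply/imsetP/imsetP=> [[z _ ->]|[d _ ->]]; last by exists (inl (inl d)).
    case: z => [[d|d]|[d|d]].
    + by exists d.
    + exists (fp (alpha d)) => //.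
      have -> : inl (inr d) = f (f (f (inl (inl (fp (alpha d)))))) :> rdart D.
        by rewrite !fE /= /ds /dual_sigma permK aK.
      by rewrite !porbitS.
    + exists (fp d) => //.
      have -> : inr (inl d) = f (f (inl (inl (fp d)))) :> rdart D.
        by rewrite !fE /= /ds /dual_sigma permK.
      by rewrite !porbitS.
    + exists d => //.
      have -> : inr (inr d) = f (inl (inl d)) :> rdart D by rewrite !fE.
      by rewrite !porbitS.
  by rewrite /ref_faces -/f Eq card_imset // cardsT cardD.
- move=> d x y; rewrite /crossing_vertex.
  set rs := ref_sigma alpha sigma.
  set ds := dual_sigma alpha sigma.
  have rsE : forall z, rs z = ref_sigma_fun alpha sigma z by move=> z; rewrite permE.
  have raE : forall z, ref_alpha D z = ref_alpha_fun z by move=> z; rewrite permE.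
  have Xsub : porbit rs (inl (inr d)) \subset [set z | [|| z == inl (inr d),
      z == inr (inr d), z == inl (inr (alpha d)) | z == inr (inr (alpha d))]].
    apply: porbit_sub; first by rewrite inE eqxx.
    by move=> z; rewrite !inE => /or4P[]/eqP->; rewrite rsE /= ?aK eqxx ?orbT.
  have Porb : forall e, porbit rs (inl (inl e)) \subset
      [set z : rdart D | if z is inl (inl y) then y \in porbit sigma e else false].
    move=> e; apply: porbit_sub; first by rewrite inE porbit_id.
    move=> [[z|z]|[z|z]]; rewrite inE //= rsE inE /= => H.
    have <- : porbit sigma z = porbit sigma e by apply/eqP; rewrite eq_porbit_mem.
    exact: mem_porbitS.
  have Rorb : forall e, porbit rs (inr (inl e)) \subset
      [set z : rdart D | if z is inr (inl y) then y \in porbit ds e else false].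
    move=> e; apply: porbit_sub; first by rewrite inE porbit_id.
    move=> [[z|z]|[z|z]]; rewrite inE //= rsE inE /= => H.
    have <- : porbit ds z = porbit ds e by apply/eqP; rewrite eq_porbit_mem.
    exact: mem_porbitS.
  have LPP : forall a b, a \notin porbit sigma b ->
      porbit rs (inl (inl a)) != porbit rs (inl (inl b)).
    move=> a b nab; rewrite eq_porbit_mem; apply/negP => /(subsetP (Porb b)).
    by rewrite inE /=; apply/negP.
  have LRR : forall a b, a \notin porbit ds b ->
      porbit rs (inr (inl a)) != porbit rs (inr (inl b)).
    move=> a b nab; rewrite eq_porbit_mem; apply/negP => /(subsetP (Rorb b)).
    by rewrite inE /=; apply/negP.
  have LPR : forall a b, porbit rs (inl (inl a)) != porbit rs (inr (inl b)).
    move=> a b; rewrite eq_porbit_mem; apply/negP => /(subsetP (Rorb b)).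
    by rewrite inE.
  have LRP : forall a b, porbit rs (inr (inl b)) != porbit rs (inl (inl a)).
    by move=> a b; rewrite eq_sym.
  have nl1 : d \notin porbit sigma (alpha d) by have := noloop (alpha d); rewrite aK.
  have nl2 := noloop d.
  have e1 : d \notin porbit ds (alpha d) by rewrite dualE; have := E (alpha d); rewrite aK.
  have e2 : alpha d \notin porbit ds d by rewrite dualE; exact: E.
  move=> /(subsetP Xsub) + /(subsetP Xsub); rewrite !inE.
  move=> /or4P[]/eqP-> /or4P[]/eqP->; rewrite ?eqxx // => _; rewrite !raE /=;
    by [apply: LPR | apply: LRP | apply: LPP | apply: LRR].
Qed.
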